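(* Let $\mathcal{S}=\{c\in\mathbb{M}_2: 0\le c\le 1,\ \operatorname{trace}(c)=1,\ 0<\det(c)<\tfrac14\}$. Let $a=\begin{pmatrix} t&\alpha\\ \bar\alpha&1-t\end{pmatrix}$ and $b=\begin{pmatrix} x& y+iz\\ y-iz&1-x\end{pmatrix}$ be elements of $\mathcal{S}$ (with $t,x,y,z\in\mathbb{R}$, $\alpha\in\mathbb{C}$). Let $\lambda_1>\lambda_2$ be the eigenvalues of $a$, and set $\widetilde a=(t,\operatorname{Re}\alpha,\operatorname{Im}\alpha)$, $\widetilde{a'}=(1-t,-\operatorname{Re}\alpha,-\operatorname{Im}\alpha)$, $\widetilde{p_a}=\frac{1}{\lambda_1-\lambda_2}(t-\lambda_2,\operatorname{Re}\alpha,\operatorname{Im}\alpha)$, $\widetilde{p_a'}=\frac{1}{\lambda_1-\lambda_2}(\lambda_1-t,-\operatorname{Re}\alpha,-\operatorname{Im}\alpha)$, and $\mathcal{E}_a=\{v\in\mathbb{R}^3: d_2(v,\widetilde a)+d_2(v,\widetilde{a'})=1\}$, where $d_2$ is the Euclidean distance on $\mathbb{R}^3$. Then $a$ is absolutely compatible with $b$ if, and only if, the point $\widetilde b=(x,y,z)$ lies in $\mathcal{E}_a\setminus\{\widetilde{p_a},\widetilde{p_a'}\}$.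
   Context: $\mathbb{M}_2$ is the algebra of $2\times2$ complex matrices; $\operatorname{trace}$ is the non-normalized trace. For $x\in\mathbb{M}_2$, $|x|=(x^*x)^{1/2}$. Elements $0\le a,b\le 1$ are absolutely compatible if $|a-b|+|1-a-b|=1$. *)

(* Defs.v *)
From HB Require Import structures.
From mathcomp Require Import all_boot all_order all_algebra.
From mathcomp Require Import complex.
From mathcomp Require Import reals.
From Stdlib Require Import ClassicalEpsilon.
Set Implicit Arguments.
Unset Strict Implicit.
Unset Printing Implicit Defensive.
Import Order.TTheory GRing.Theory Num.Theory.
Local Open Scope ring_scope.
Local Open Scope sesquilinear_scope.
Local Open Scope complex_scope.

Section Defs.
Variable R : realType.
Local Notation C := (R[i]).

Definition adj2 (A : 'M[C]_2) : 'M[C]_2 := A ^t*.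

Definition psdmx (A : 'M[C]_2) : Prop :=
  adj2 A = A /\ forall v : 'rV[C]_2, 0 <= (v *m A *m v ^t*) 0 0.

Definition mabs (X : 'M[C]_2) : 'M[C]_2 :=
  epsilon (inhabits 0) (fun M => psdmx M /\ M *m M = adj2 X *m X).

Definition abs_compatible (a b : 'M[C]_2) : Prop :=
  mabs (a - b) + mabs (1 - a - b) = 1.

Definition inS (c : 'M[C]_2) : Prop :=
  psdmx c /\ psdmx (1 - c) /\ \tr c = 1 /\ 0 < \det c /\ \det c < 4^-1.

Definition mx2 (p q r s : C) : 'M[C]_2 :=
  \matrix_(i < 2, j < 2)
    (if i == 0 :> nat then (if j == 0 :> nat then p else q)
     else (if j == 0 :> nat then r else s)).

Definition amat (t : R) (alpha : C) : 'M[C]_2 :=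
  mx2 t%:C alpha (Num.conj alpha) (1 - t)%:C.

Definition bmat (x y z : R) : 'M[C]_2 :=
  mx2 x%:C (y%:C + 'i * z%:C) (y%:C - 'i * z%:C) (1 - x)%:C.

Definition pt3 (u v w : R) : 'rV[R]_3 := \row_(k < 3) [:: u; v; w]`_k.

Definition d2 (v w : 'rV[R]_3) : R := Num.sqrt (\sum_(k < 3) (v 0 k - w 0 k) ^+ 2).

End Defs.

(* Main.v *)
Require Import Defs.
From HB Require Import structures.
From mathcomp Require Import all_boot all_order all_algebra.
From mathcomp Require Import complex.
From mathcomp Require Import reals.
From mathcomp Require Import ring lra.
From Stdlib Require Import ClassicalEpsilon.
Import Order.TTheory GRing.Theory Num.Theory.
Local Open Scope ring_scope.
Local Open Scope complex_scope.
Local Open Scope sesquilinear_scope.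
Set Implicit Arguments.
Section S.
Context {R : realType}.
Local Notation C := (R[i]).
Implicit Types (u v : C).

Lemma ReD u v : complex.Re (u + v) = complex.Re u + complex.Re v. Proof. case: u => a b; case: v => c d; reflexivity. Qed.
Lemma ImD u v : complex.Im (u + v) = complex.Im u + complex.Im v. Proof. case: u => a b; case: v => c d; reflexivity. Qed.
Lemma ReN u : complex.Re (- u) = - complex.Re u. Proof. case: u => a b; reflexivity. Qed.
Lemma ImN u : complex.Im (- u) = - complex.Im u. Proof. case: u => a b; reflexivity. Qed.
Lemma ReM u v : complex.Re (u * v) = complex.Re u * complex.Re v - complex.Im u * complex.Im v. Proof. case: u => a b; case: v => c d; reflexivity. Qed.
Lemma ImM u v : complex.Im (u * v) = complex.Re u * complex.Im v + complex.Im u * complex.Re v. Proof. case: u => a b; case: v => c d; reflexivity. Qed.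
Lemma ReJ u : complex.Re (Num.conj u) = complex.Re u. Proof. case: u => a b; reflexivity. Qed.
Lemma ImJ u : complex.Im (Num.conj u) = - complex.Im u. Proof. case: u => a b; reflexivity. Qed.
Lemma ReC (k : R) : complex.Re (k%:C) = k. Proof. by []. Qed.
Lemma ImC (k : R) : complex.Im (k%:C) = 0. Proof. by []. Qed.
Lemma Re1 : complex.Re (1 : C) = 1. Proof. by []. Qed.
Lemma Im1 : complex.Im (1 : C) = 0. Proof. by []. Qed.
Lemma Re0 : complex.Re (0 : C) = 0. Proof. by []. Qed.
Lemma Im0 : complex.Im (0 : C) = 0. Proof. by []. Qed.
Lemma Rei : complex.Re ('i : C) = 0. Proof. by []. Qed.
Lemma Imi : complex.Im ('i : C) = 1. Proof. by []. Qed.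
Lemma ReX (a b : R) : complex.Re (a +i* b) = a. Proof. by []. Qed.
Lemma ImX (a b : R) : complex.Im (a +i* b) = b. Proof. by []. Qed.

Definition RIE := (ReX, ImX, ReD, ImD, ReN, ImN, ReM, ImM, ReJ, ImJ, ReC, ImC, Re1, Im1, Re0, Im0, Rei, Imi).

Lemma ceqP u v : complex.Re u = complex.Re v -> complex.Im u = complex.Im v -> u = v.
Proof. by case: u => a b; case: v => c d /= -> ->. Qed.

Lemma test (a b c d : R) : (a +i* b) * (c +i* d) - Num.conj (a +i* b) + 'i * (1 - c%:C) = (a*c - b*d - a - 0) +i* (a*d+b*c + b + (1 - c)).
Proof. apply: ceqP; rewrite !RIE; ring. Qed.
Lemma test2 (a b c d : R) (u : C) : u * Num.conj u - (c%:C + 'i * d%:C) * (1 - a%:C) = ((complex.Re u)^+2 + (complex.Im u)^+2 - c * (1 - a))%:C - 'i * (d * (1 - a))%:C.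
Proof. apply: ceqP; rewrite !RIE; ring. Qed.

Lemma big_ord2 (F : 'I_2 -> C) : \sum_(k < 2) F k = F 0 + F 1.
Proof. by rewrite big_ord_recl big_ord1; congr (_ + F _); apply: val_inj. Qed.

Lemma ord2E (k : 'I_2) : k = 0 \/ k = 1.
Proof. case: k => [[|[|k]] Hk]; [left|right|by []]; exact: val_inj. Qed.

Lemma eq_mx2 (M N : 'M[C]_2) : M 0 0 = N 0 0 -> M 0 1 = N 0 1 -> M 1 0 = N 1 0 -> M 1 1 = N 1 1 -> M = N.
Proof.
move=> h1 h2 h3 h4; apply/matrixP => i j.
by case: (ord2E i) => ->; case: (ord2E j) => ->.
Qed.

Lemma mx2E00 p q r s : @mx2 R p q r s 0 0 = p. Proof. by rewrite mxE. Qed.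
Lemma mx2E01 p q r s : @mx2 R p q r s 0 1 = q. Proof. by rewrite mxE. Qed.
Lemma mx2E10 p q r s : @mx2 R p q r s 1 0 = r. Proof. by rewrite mxE. Qed.
Lemma mx2E11 p q r s : @mx2 R p q r s 1 1 = s. Proof. by rewrite mxE. Qed.
Definition mx2E := (mx2E00, mx2E01, mx2E10, mx2E11).

Lemma mulmx2E m n (M : 'M[C]_(m,2)) (N : 'M[C]_(2,n)) i j : (M *m N) i j = M i 0 * N 0 j + M i 1 * N 1 j.
Proof. by rewrite mxE big_ord2. Qed.

Lemma adj2E (M : 'M[C]_2) i j : adj2 M i j = Num.conj (M j i).
Proof. by rewrite /adj2 !mxE. Qed.

Lemma scalE (c : C) (i j : 'I_2) : (c%:M : 'M[C]_2) i j = if i == j then c else 0.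
Proof. by rewrite mxE; case: (i == j). Qed.

Lemma oneE (i j : 'I_2) : (1 : 'M[C]_2) i j = if i == j then 1 else 0.
Proof. by rewrite mxE; case: (i == j). Qed.

Lemma quadE (M : 'M[C]_2) (v : 'rV[C]_2) : (v *m M *m v ^t*) 0 0 =
  v 0 0 * M 0 0 * Num.conj (v 0 0) + v 0 0 * M 0 1 * Num.conj (v 0 1)
  + v 0 1 * M 1 0 * Num.conj (v 0 0) + v 0 1 * M 1 1 * Num.conj (v 0 1).
Proof. rewrite !mulmx2E !mxE; ring. Qed.

Lemma det2 (M : 'M[C]_2) : \det M = M 0 0 * M 1 1 - M 0 1 * M 1 0.
Proof.
rewrite (expand_det_row _ 0) big_ord2 /cofactor !det_mx11 !mxE /=.
have -> : lift (0:'I_2) (0:'I_1) = 1 by apply: val_inj.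
have -> : lift (1:'I_2) (0:'I_1) = 0 by apply: val_inj.
rewrite expr0 expr1; ring.
Qed.


Lemma scal_mx2 (c : C) : (c%:M : 'M[C]_2) = mx2 c 0 0 c.
Proof. by apply: eq_mx2; rewrite !mxE. Qed.
Lemma one_mx2 : (1 : 'M[C]_2) = mx2 1 0 0 1.
Proof. by apply: eq_mx2; rewrite !mxE. Qed.

Definition rv2 (a b : C) : 'rV[C]_2 := \row_(k < 2) (if k == 0 :> nat then a else b).
Lemma rv2E0 a b : rv2 a b 0 0 = a. Proof. by rewrite mxE. Qed.
Lemma rv2E1 a b : rv2 a b 0 1 = b. Proof. by rewrite mxE. Qed.

Lemma ge0C (u : C) : 0 <= u -> complex.Im u = 0 /\ 0 <= complex.Re u.
Proof. by rewrite lecE => /andP[/eqP h1 h2]; split. Qed.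
Lemma ge0C' (u : C) : complex.Im u = 0 -> 0 <= complex.Re u -> 0 <= u.
Proof. by move=> h1 h2; rewrite lecE h1; apply/andP. Qed.

Lemma psd_scal (k : R) : 0 <= k -> psdmx (k%:C%:M).
Proof.
move=> k0; rewrite /psdmx scal_mx2; split.
  by apply: eq_mx2; rewrite !adj2E !mx2E; apply: ceqP; rewrite !RIE; ring.
move=> v; rewrite quadE !mx2E.
apply: ge0C'; rewrite !RIE; first ring.
nra.
Qed.

Lemma sqrt_unique (c : R) (M : 'M[C]_2) : 0 <= c -> psdmx M -> M *m M = c%:C%:M -> M = (Num.sqrt c)%:C%:M.
Proof.
move=> c0 [hA hq] hM.
have e00 : adj2 M 0 0 = M 0 0 by rewrite hA.
have e11 : adj2 M 1 1 = M 1 1 by rewrite hA.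
have e10 : adj2 M 1 0 = M 1 0 by rewrite hA.
rewrite !adj2E in e00 e11 e10.
set p := complex.Re (M 0 0); set s := complex.Re (M 1 1); set q := M 0 1.
have EM : M = mx2 p%:C q (Num.conj q) s%:C.
  apply: eq_mx2; rewrite !mx2E //.
  - apply: ceqP; rewrite !RIE //. move: (congr1 (@complex.Im R) e00); rewrite !RIE; lra.
  - apply: ceqP; rewrite !RIE //. move: (congr1 (@complex.Im R) e11); rewrite !RIE; lra.
have m00 : complex.Re ((M *m M) 0 0) = complex.Re (((c%:C)%:M : 'M[C]_2) 0 0) by rewrite hM.
have m11 : complex.Re ((M *m M) 1 1) = complex.Re (((c%:C)%:M : 'M[C]_2) 1 1) by rewrite hM.
have m01 : complex.Re ((M *m M) 0 1) = complex.Re (((c%:C)%:M : 'M[C]_2) 0 1) by rewrite hM.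
have m01' : complex.Im ((M *m M) 0 1) = complex.Im (((c%:C)%:M : 'M[C]_2) 0 1) by rewrite hM.
rewrite EM in hq hM *; rewrite scal_mx2.
have h1 := hq (rv2 1 0); have h2 := hq (rv2 0 1); have h3 := hq (rv2 1 (- q)).
rewrite quadE !mx2E !rv2E0 !rv2E1 in h1; rewrite quadE !mx2E !rv2E0 !rv2E1 in h2;
rewrite quadE !mx2E !rv2E0 !rv2E1 in h3.
case/ge0C: h1 => _; case/ge0C: h2 => _; case/ge0C: h3 => _.
rewrite !RIE => h3 h2 h1.
rewrite EM !mulmx2E !scal_mx2 !mx2E !RIE in m00 m11 m01 m01'.
set q1 := complex.Re q in h1 h2 h3 m00 m11 m01 m01' *.
set q2 := complex.Im q in h1 h2 h3 m00 m11 m01 m01' *.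
have p0 : 0 <= p by lra.
have s0 : 0 <= s by lra.
have ps : p = s by nra.
have qq : q1 = 0 /\ q2 = 0.
  case: (eqVneq p 0) => [P0|pp]; first by split; nra.
  have pp' : 0 < p by rewrite lt_neqAle eq_sym pp.
  split; nra.
case: qq => Q1 Q2.
have pc : p = Num.sqrt c.
  have -> : c = p ^+ 2 by rewrite -m00 Q1 Q2; ring.
  by rewrite sqrtr_sqr ger0_norm.
apply: eq_mx2; rewrite !mx2E; apply: ceqP; rewrite !RIE -/q1 -/q2 //; lra.
Qed.


Lemma mabs_scal (X : 'M[C]_2) (c : R) : 0 <= c -> adj2 X *m X = (c%:C)%:M -> mabs X = ((Num.sqrt c)%:C)%:M.
Proof.
move=> c0 hX.
have sq : ((Num.sqrt c)%:C)%:M *m ((Num.sqrt c)%:C)%:M = adj2 X *m X.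
  rewrite hX -scalar_mxM; congr (_%:M); apply: ceqP; rewrite !RIE.
    by rewrite -expr2 sqr_sqrtr //; ring.
  ring.
have ex : exists M, psdmx M /\ M *m M = adj2 X *m X.
  exists ((Num.sqrt c)%:C)%:M; split => //; apply: psd_scal; exact: sqrtr_ge0.
have [h1 h2] := epsilon_spec (inhabits 0) _ ex.
rewrite /mabs; apply: sqrt_unique => //; by rewrite h2.
Qed.

Lemma adjX_tl (u v w : R) : adj2 (mx2 u%:C (v%:C + 'i * w%:C) (v%:C - 'i * w%:C) (-u)%:C) *m
   (mx2 u%:C (v%:C + 'i * w%:C) (v%:C - 'i * w%:C) (-u)%:C) = ((u^+2+v^+2+w^+2)%:C)%:M.
Proof.
by rewrite scal_mx2; apply: eq_mx2; rewrite !mulmx2E !adj2E !mx2E; apply: ceqP; rewrite !RIE; ring.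
Qed.

Lemma big_ord3R (F : 'I_3 -> R) : \sum_(k < 3) F k = F 0 + F 1 + F 2.
Proof.
rewrite !big_ord_recl big_ord0 addr0 addrA; congr (_ + F _ + F _); by apply: val_inj.
Qed.

Lemma pt3E0 (u v w : R) : pt3 u v w 0 0 = u. Proof. by rewrite mxE. Qed.
Lemma pt3E1 (u v w : R) : pt3 u v w 0 1 = v. Proof. by rewrite mxE. Qed.
Lemma pt3E2 (u v w : R) : pt3 u v w 0 2 = w. Proof. by rewrite mxE. Qed.
Definition pt3E := (pt3E0, pt3E1, pt3E2).

Lemma d2E (a b c a' b' c' : R) : d2 (pt3 a b c) (pt3 a' b' c') = Num.sqrt ((a - a')^+2 + (b - b')^+2 + (c - c')^+2).
Proof. by rewrite /d2 big_ord3R !pt3E. Qed.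

Lemma eigen_eq (t l : R) (al : C) : eigenvalue (amat t al) l%:C ->
  (l - t) * (l - 1 + t) - ((complex.Re al)^+2 + (complex.Im al)^+2) = 0.
Proof.
case/eigenvalueP => v hv nz.
have E0 : (v *m amat t al) 0 0 = (l%:C *: v) 0 0 by rewrite hv.
have E1 : (v *m amat t al) 0 1 = (l%:C *: v) 0 1 by rewrite hv.
rewrite mulmx2E /amat !mx2E !mxE in E0; rewrite mulmx2E !mx2E !mxE in E1.
set k := (l%:C - t%:C) * (l%:C - (1-t)%:C) - al * Num.conj al.
have k0 : k * v 0 0 = 0.
  have -> : k * v 0 0 = Num.conj al * (l%:C * v 0 1 - (v 0 0 * al + v 0 1 * (1-t)%:C))
     + (l%:C - (1-t)%:C) * (l%:C * v 0 0 - (v 0 0 * t%:C + v 0 1 * Num.conj al)) by rewrite /k; ring.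
  by rewrite E0 E1 !subrr; ring.
have k1 : k * v 0 1 = 0.
  have -> : k * v 0 1 = al * (l%:C * v 0 0 - (v 0 0 * t%:C + v 0 1 * Num.conj al))
     + (l%:C - t%:C) * (l%:C * v 0 1 - (v 0 0 * al + v 0 1 * (1-t)%:C)) by rewrite /k; ring.
  by rewrite E0 E1 !subrr; ring.
have kz : k = 0.
  move: k0 k1 => /eqP; rewrite mulf_eq0 => /orP[/eqP //|/eqP a0] /eqP; rewrite mulf_eq0 => /orP[/eqP //|/eqP a1].
  case/negP: nz; apply/eqP/matrixP => i j; rewrite (ord1 i) mxE.
  by case: (ord2E j) => ->.
have := congr1 (@complex.Re R) kz; rewrite /k !RIE => <-; ring.
Qed.


Lemma AmB (t : R) (al : C) (x y z : R) : amat t al - bmat x y z =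
  mx2 (t - x)%:C ((complex.Re al - y)%:C + 'i * (complex.Im al - z)%:C)
      ((complex.Re al - y)%:C - 'i * (complex.Im al - z)%:C) (- (t - x))%:C.
Proof. by apply: eq_mx2; rewrite !mxE /=; apply: ceqP; rewrite !RIE; ring. Qed.

Lemma OmAmB (t : R) (al : C) (x y z : R) : 1 - amat t al - bmat x y z =
  mx2 (1 - t - x)%:C ((- complex.Re al - y)%:C + 'i * (- complex.Im al - z)%:C)
      ((- complex.Re al - y)%:C - 'i * (- complex.Im al - z)%:C) (- (1 - t - x))%:C.
Proof. by apply: eq_mx2; rewrite !mxE /=; apply: ceqP; rewrite !RIE; ring. Qed.

End S.
Unset Implicit Arguments.
Local Close Scope sesquilinear_scope.

Theorem theorem3p7 (R : realType) (t : R) (alpha : R[i]) (x y z : R) (l1 l2 : R) :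
  inS (amat t alpha) -> inS (bmat x y z) ->
  eigenvalue (amat t alpha) l1%:C -> eigenvalue (amat t alpha) l2%:C -> l2 < l1 ->
  let at_ := pt3 t (complex.Re alpha) (complex.Im alpha) in
  let at' := pt3 (1 - t) (- complex.Re alpha) (- complex.Im alpha) in
  let pa := (l1 - l2)^-1 *: pt3 (t - l2) (complex.Re alpha) (complex.Im alpha) in
  let pa' := (l1 - l2)^-1 *: pt3 (l1 - t) (- complex.Re alpha) (- complex.Im alpha) in
  let bt := pt3 x y z in
  abs_compatible (amat t alpha) (bmat x y z) <->
  (d2 bt at_ + d2 bt at' = 1 /\ bt <> pa /\ bt <> pa').
Proof.
move=> _ [_ [_ [_ [detB _]]]] ev1 ev2 hl at_ at' pa pa' bt.
have e1 := @eigen_eq R t l1 alpha ev1; have e2 := @eigen_eq R t l2 alpha ev2.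
set ar := complex.Re alpha in e1 e2 at_ at' pa pa' *.
set ai := complex.Im alpha in e1 e2 at_ at' pa pa' *.
have D : 0 < x * (1 - x) - (y^+2 + z^+2).
  by move: detB; rewrite det2 /bmat !mx2E ltcE => /andP[_ detB]; rewrite !RIE in detB; nra.
clear detB.
have S : l1 + l2 = 1.
  have H : (l1 - l2) * (l1 + l2 - 1) = ((l1 - t) * (l1 - 1 + t) - (ar ^+ 2 + ai ^+ 2)) - ((l2 - t) * (l2 - 1 + t) - (ar ^+ 2 + ai ^+ 2)) by ring.
  move: H; rewrite e1 e2 subrr => /eqP; rewrite mulf_eq0 subr_eq0 => /orP[/eqP|/eqP]; lra.
have L1 : l1 = 1 - l2 by lra.
set e := (l1 - l2)^-1.
have eD : e * (l1 - l2) = 1 by rewrite /e mulVf // subr_eq0 gt_eqF.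
have npa : bt <> pa.
  move=> h.
  have h0 : bt 0 0 = pa 0 0 by rewrite h.
  have h1 : bt 0 1 = pa 0 1 by rewrite h.
  have h2 : bt 0 2 = pa 0 2 by rewrite h.
  rewrite /bt /pa !mxE /= in h0 h1 h2.
  rewrite h0 h1 h2 in D.
  have Z : e * (t - l2) * (1 - e * (t - l2)) - ((e * ar)^+2 + (e * ai)^+2) = e * (t - l2) * (1 - e * (l1 - l2)) + e^+2 * ((l2 - t) * (l2 - 1 + t) - (ar ^+ 2 + ai ^+ 2)).
    rewrite L1; ring.
  by move: D; rewrite Z eD e2 subrr !mulr0 addr0 ltxx.
have npa' : bt <> pa'.
  move=> h.
  have h0 : bt 0 0 = pa' 0 0 by rewrite h.
  have h1 : bt 0 1 = pa' 0 1 by rewrite h.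
  have h2 : bt 0 2 = pa' 0 2 by rewrite h.
  rewrite /bt /pa' !mxE /= in h0 h1 h2.
  rewrite h0 h1 h2 in D.
  have Z : e * (l1 - t) * (1 - e * (l1 - t)) - ((e * - ar)^+2 + (e * - ai)^+2) = e * (l1 - t) * (1 - e * (l1 - l2)) + e^+2 * ((l2 - t) * (l2 - 1 + t) - (ar ^+ 2 + ai ^+ 2)).
    rewrite L1; ring.
  by move: D; rewrite Z eD e2 subrr !mulr0 addr0 ltxx.
rewrite /abs_compatible AmB OmAmB.
rewrite (mabs_scal _ (adjX_tl _ _ _)); last by rewrite !addr_ge0 // sqr_ge0.
rewrite (mabs_scal _ (adjX_tl _ _ _)); last by rewrite !addr_ge0 // sqr_ge0.
rewrite /bt /at_ /at' !d2E.
have -> : (x - t) ^+ 2 + (y - ar) ^+ 2 + (z - ai) ^+ 2 = (t - x) ^+ 2 + (ar - y) ^+ 2 + (ai - z) ^+ 2 by ring.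
have -> : (x - (1 - t)) ^+ 2 + (y - - ar) ^+ 2 + (z - - ai) ^+ 2 = (1 - t - x) ^+ 2 + (- ar - y) ^+ 2 + (- ai - z) ^+ 2 by ring.
split.
  move=> h; split => //.
  have := congr1 (fun M : 'M[R[i]]_2 => complex.Re (M 0 0)) h.
  rewrite /= one_mx2 !scal_mx2 !mxE /=. by [].
case=> h _; rewrite one_mx2 !scal_mx2; apply: eq_mx2; rewrite !mxE /=; apply: ceqP; rewrite /= ?RIE //. all: by rewrite ?addr0.
Qed.
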